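(* Let $(Y,\preceq,\prec,\to)$ be a solid vector space. The following are equivalent: (i) $Y$ is a normal vector space; (ii) the convergence in $Y$ is generated by a monotone norm on $Y$, i.e. there is a monotone norm $\|\cdot\|$ on $Y$ such that for all sequences $(x_n)$ and $x\in Y$, $x_n\to x$ iff $\|x_n-x\|\to0$; (iii) the convergence in $Y$ is generated by the order topology $\tau$ on $Y$, i.e. $x_n\to x$ iff $x_n\to x$ in $\tau$.
   Context: Vector space with convergence: a real vector space $Y$ with a relation $\to$ between sequences in $Y$ and points of $Y$ (uniqueness of limits not assumed) such that (C1) $x_n\to x$, $y_n\to y$ imply $x_n+y_n\to x+y$; (C2) $x_n\to x$, $\lambda\in\mathbb R$ imply $\lambda x_n\to\lambda x$; (C3) $\lambda_n\to\lambda$ in $\mathbb R$ imply $\lambda_n x\to\lambda x$. $A\subseteq Y$ is open if $x_n\to x\in A$ implies $x_n\in A$ for all but finitely many $n$; closed if $x_n\to x$, $x_n\in A$ $\forall n$ imply $x\in A$; $A^\circ$ is the union of all open subsets of $A$. A cone is a nonempty closed $K$ with $\lambda K\subseteq K$ ($\lambda\ge0$), $K+K\subseteq K$, $K\cap(-K)=\{0\}$; solid if $K\ne\{0\}$, $K^\circ\ne\emptyset$. A vector ordering is a partial order $\preceq$ with (V1) $x\preceq y\Rightarrow x+z\preceq y+z$; (V2) $\lambda\ge0$, $x\preceq y\Rightarrow\lambda x\preceq\lambda y$; (V3) $x_n\to x$, $y_n\to y$, $x_n\preceq y_n$ $\forall n\Rightarrow x\preceq y$. Solid vector space: positive cone $K=\{x:x\succeq0\}$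 solid, with $x\prec y$ iff $y-x\in K^\circ$. Normal: whenever $x_n\preceq y_n\preceq z_n$ for all $n$, $x_n\to x$ and $z_n\to x$, then $y_n\to x$. Monotone norm: $\|x\|\le\|y\|$ whenever $0\preceq x\preceq y$. Order topology: basis the open intervals $(a,b)=\{x:a\prec x\prec b\}$, $a\prec b$. *)

(* Defs.v *)
From HB Require Import structures.
From mathcomp Require Import all_boot all_order all_algebra.
From mathcomp Require Import all_classical all_reals topology normedtype sequences.
Set Implicit Arguments. Unset Strict Implicit. Unset Printing Implicit Defensive.
Import Order.TTheory GRing.Theory Num.Theory.
Import numFieldNormedType.Exports.
Local Open Scope classical_set_scope.
Local Open Scope ring_scope.

Section Defs.
Variables (R : realType) (Y : lmodType R).

Definition convergence := (nat -> Y) -> Y -> Prop.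

Definition eventually_in (xs : nat -> Y) (A : set Y) : Prop :=
  exists N : nat, forall n : nat, (N <= n)%N -> A (xs n).

Definition vsc (conv : convergence) : Prop :=
  [/\ (forall xs ys x y, conv xs x -> conv ys y ->
         conv (fun n => xs n + ys n) (x + y)),
      (forall xs x (l : R), conv xs x -> conv (fun n => l *: xs n) (l *: x)) &
      (forall (ls : nat -> R) (l : R) (x : Y), ls @ \oo --> l ->
         conv (fun n => ls n *: x) (l *: x))].

Definition c_open (conv : convergence) (A : set Y) : Prop :=
  forall xs x, conv xs x -> A x -> eventually_in xs A.

Definition c_closed (conv : convergence) (A : set Y) : Prop :=
  forall xs x, conv xs x -> (forall n, A (xs n)) -> A x.

Definition c_interior (conv : convergence) (A : set Y) : set Y :=
  [set x | exists U : set Y, [/\ c_open conv U, U `<=` A & U x]].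

Definition is_cone (conv : convergence) (K : set Y) : Prop :=
  [/\ K !=set0, c_closed conv K,
      (forall (l : R) x, 0 <= l -> K x -> K (l *: x)),
      (forall x y, K x -> K y -> K (x + y)) &
      K `&` (fun x => K (- x)) = [set 0]].

Definition solid_cone (conv : convergence) (K : set Y) : Prop :=
  [/\ is_cone conv K, K <> [set 0] & c_interior conv K !=set0].

Definition vector_ordering (conv : convergence) (le : Y -> Y -> Prop) : Prop :=
  [/\ [/\ (forall x, le x x),
      (forall x y, le x y -> le y x -> x = y) &
      (forall x y z, le x y -> le y z -> le x z)],
      (forall x y z, le x y -> le (x + z) (y + z)),
      (forall (l : R) x y, 0 <= l -> le x y -> le (l *: x) (l *: y)) &
      (forall xs ys x y, conv xs x -> conv ys y -> (forall n, le (xs n) (ys n)) ->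
         le x y)].

Definition positive_cone (le : Y -> Y -> Prop) : set Y := [set x | le 0 x].

Definition solid_vector_space (conv : convergence) (le : Y -> Y -> Prop) : Prop :=
  [/\ vsc conv, vector_ordering conv le & solid_cone conv (positive_cone le)].

Definition slt (conv : convergence) (le : Y -> Y -> Prop) (x y : Y) : Prop :=
  c_interior conv (positive_cone le) (y - x).

Definition normal_vector_space (conv : convergence) (le : Y -> Y -> Prop) : Prop :=
  forall xs ys zs x, (forall n, le (xs n) (ys n) /\ le (ys n) (zs n)) ->
    conv xs x -> conv zs x -> conv ys x.

Definition is_norm (nrm : Y -> R) : Prop :=
  [/\ (forall x, 0 <= nrm x),
      (forall x, nrm x = 0 -> x = 0),
      (forall (l : R) x, nrm (l *: x) = `|l| * nrm x) &
      (forall x y, nrm (x + y) <= nrm x + nrm y)].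

Definition monotone_norm (le : Y -> Y -> Prop) (nrm : Y -> R) : Prop :=
  is_norm nrm /\ (forall x y, le 0 x -> le x y -> nrm x <= nrm y).

Definition conv_generated_by_monotone_norm (conv : convergence)
    (le : Y -> Y -> Prop) : Prop :=
  exists nrm : Y -> R, monotone_norm le nrm /\
    (forall xs x, conv xs x <-> (fun n => nrm (xs n - x)) @ \oo --> (0 : R)).

Definition open_interval (conv : convergence) (le : Y -> Y -> Prop) (a b : Y) : set Y :=
  [set x | slt conv le a x /\ slt conv le x b].

Definition order_open (conv : convergence) (le : Y -> Y -> Prop) (U : set Y) : Prop :=
  forall x, U x -> exists a b, [/\ slt conv le a b,
     open_interval conv le a b x & open_interval conv le a b `<=` U].

Definition order_conv (conv : convergence) (le : Y -> Y -> Prop) (xs : nat -> Y) (x : Y) : Prop :=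
  forall U, order_open conv le U -> U x -> eventually_in xs U.

Definition conv_generated_by_order_topology (conv : convergence)
    (le : Y -> Y -> Prop) : Prop :=
  forall xs x, conv xs x <-> order_conv conv le xs x.

End Defs.

(* Main.v *)
Require Import Defs.
From mathcomp Require Import all_boot all_order all_algebra.
From mathcomp Require Import all_classical all_reals topology normedtype sequences.
Set Implicit Arguments. Unset Strict Implicit. Unset Printing Implicit Defensive.
Import Order.TTheory GRing.Theory Num.Theory.
Import numFieldNormedType.Exports.
Local Open Scope classical_set_scope.
Local Open Scope ring_scope.

Section Proof7.
Variables (R : realType) (Y : lmodType R) (cv : convergence Y) (le : Y -> Y -> Prop).
Hypothesis H : solid_vector_space cv le.

Local Notation K := (positive_cone le).
Local Notation intK := (c_interior cv (positive_cone le)).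

Lemma cvD xs ys x y : cv xs x -> cv ys y -> cv (fun n => xs n + ys n) (x + y).
Proof. by case: H => [[D _ _] _ _]; apply: D. Qed.
Lemma cvZ xs x (l : R) : cv xs x -> cv (fun n => l *: xs n) (l *: x).
Proof. by case: H => [[_ D _] _ _]; apply: D. Qed.
Lemma cvS (ls : nat -> R) (l : R) x : ls @ \oo --> l -> cv (fun n => ls n *: x) (l *: x).
Proof. by case: H => [[_ _ D] _ _]; apply: D. Qed.
Lemma leY_refl x : le x x.
Proof. by case: H => [_ [[D _ _] _ _ _] _]; apply: D. Qed.
Lemma leY_anti x y : le x y -> le y x -> x = y.
Proof. by case: H => [_ [[_ D _] _ _ _] _]; apply: D. Qed.
Lemma leY_trans x y z : le x y -> le y z -> le x z.
Proof. by case: H => [_ [[_ _ D] _ _ _] _]; apply: D. Qed.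
Lemma le_add x y z : le x y -> le (x + z) (y + z).
Proof. by case: H => [_ [_ D _ _] _]; apply: D. Qed.
Lemma le_scale (l : R) x y : 0 <= l -> le x y -> le (l *: x) (l *: y).
Proof. by case: H => [_ [_ _ D _] _]; apply: D. Qed.
Lemma le_lim xs ys x y : cv xs x -> cv ys y -> (forall n, le (xs n) (ys n)) -> le x y.
Proof. by case: H => [_ [_ _ _ D] _]; apply: D. Qed.

Lemma cv_cst x : cv (fun=> x) x.
Proof.
have h := @cvS (fun=> 1) 1 x (cvg_cst _).
have e : (fun _ : nat => 1 *: x) = (fun=> x) by apply: funext => n; rewrite scale1r.
rewrite e scale1r in h; apply: h; exact: _.
Qed.
Lemma cv_addc xs x k : cv xs x -> cv (fun n => xs n + k) (x + k).
Proof. by move=> h; apply: cvD h (cv_cst k). Qed.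
Lemma cv_opp xs x : cv xs x -> cv (fun n => - xs n) (- x).
Proof.
move=> h; have := cvZ (-1) h.
by rewrite scaleN1r; under eq_fun do rewrite scaleN1r.
Qed.

Lemma le_sub x y : le x y -> le 0 (y - x).
Proof. by move=> h; have := le_add (- x) h; rewrite subrr. Qed.
Lemma sub_le x y : le 0 (y - x) -> le x y.
Proof. by move=> h; have := le_add x h; rewrite add0r subrK. Qed.
Lemma le_opp x y : le x y -> le (- y) (- x).
Proof.
move=> h; have := le_add (- x - y) h.
by rewrite addrA subrr add0r addrCA subrr addr0.
Qed.
Lemma le_addlr x y z w : le x y -> le z w -> le (x + z) (y + w).
Proof.
move=> h1 h2; apply: (leY_trans (le_add z h1)).
by rewrite (addrC y) (addrC y); apply: le_add.
Qed.

Lemma intK_open : c_open cv intK.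
Proof.
move=> xs x hx [U [oU UK Ux]]; have [N hN] := oU _ _ hx Ux.
by exists N => n /hN Un; exists U.
Qed.
Lemma intK_K x : intK x -> K x.
Proof. by case=> U [_ UK Ux]; apply: UK. Qed.
Lemma intK_addK u k : intK u -> K k -> intK (u + k).
Proof.
case=> U [oU UK Uu] Kk; exists (fun y => U (y - k)); split.
- move=> xs x hx Ux; have := oU _ _ (cv_addc (- k) hx) Ux; by [].
- move=> y Uy; have := le_addlr (UK _ Uy) Kk; by rewrite addr0 subrK.
- by rewrite /= addrK.
Qed.
Lemma intK_scale (l : R) u : 0 < l -> intK u -> intK (l *: u).
Proof.
move=> l0 [U [oU UK Uu]]; exists (fun y => U (l^-1 *: y)); split.
- move=> xs x hx Ux; have := oU _ _ (cvZ l^-1 hx) Ux; by [].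
- move=> y Uy; have := le_scale (ltW l0) (UK _ Uy).
  by rewrite scaler0 scalerA divff ?scale1r // gt_eqF.
- by rewrite /= scalerA mulVf ?scale1r // gt_eqF.
Qed.
Lemma K_add x y : K x -> K y -> K (x + y).
Proof. by move=> a b; have := le_addlr a b; rewrite addr0. Qed.

Variable e : Y.
Hypothesis he : intK e.

Lemma eK : le 0 e.
Proof. exact: intK_K he. Qed.

Lemma le_se (s t : R) : s <= t -> le (s *: e) (t *: e).
Proof.
move=> st; apply: sub_le; rewrite -scalerBl.
have := le_scale (l := t - s) _ eK; rewrite scaler0; apply; by rewrite subr_ge0.
Qed.

Lemma cv_harm (t : R) : (fun n => t + harmonic n) @ \oo --> t.
Proof.
have := cvgD (cvg_cst t) (@cvg_harmonic R); rewrite addr0; exact.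
Qed.

Lemma order_unit_lo y : exists t : R, 0 <= t /\ le (- (t *: e)) y.
Proof.
have c := cv_addc e (cvS y (@cvg_harmonic R)).
rewrite scale0r add0r in c.
have [N hN] := intK_open c he.
have := intK_K (hN N (leqnn N)).
move=> /(le_scale (l := N.+1%:R) (ler0n _ _)).
rewrite scaler0 scalerDr scalerA /= mulfV ?pnatr_eq0 // scale1r => h0.
exists N.+1%:R; split => //; apply: sub_le; by rewrite opprK.
Qed.

Definition bnd (t : R) y := le (- (t *: e)) y /\ le y (t *: e).

Lemma bnd_mono s t y : s <= t -> bnd s y -> bnd t y.
Proof.
move=> st [h1 h2]; split.
- exact: leY_trans (le_opp (le_se st)) h1.
- exact: leY_trans h2 (le_se st).
Qed.

Lemma order_unit y : exists t : R, 0 <= t /\ bnd t y.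
Proof.
have [t1 [t10 h1]] := order_unit_lo y.
have [t2 [t20 h2]] := order_unit_lo (- y).
exists (Num.max t1 t2); split; first by rewrite le_max t10.
apply: (@bnd_mono (Num.max t1 t2)) => //; split.
- apply: leY_trans h1; apply: le_opp; apply: le_se; by rewrite le_max lexx.
- have := le_opp h2; rewrite !opprK => h; apply: leY_trans h _.
  apply: le_se; by rewrite le_max lexx orbT.
Qed.

Definition Sb y := [set t : R | 0 <= t /\ bnd t y].
Definition p y := inf (Sb y).

Lemma Sb_n0 y : Sb y !=set0.
Proof. by have [t ht] := order_unit y; exists t. Qed.

Lemma p_ge0 y : 0 <= p y.
Proof. by apply: lb_le_inf; [exact: Sb_n0 | move=> t []]. Qed.

Lemma p_le y t : 0 <= t -> bnd t y -> p y <= t.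
Proof.
move=> t0 bt; apply: ge_inf; last by split.
by exists 0 => s [].
Qed.

Lemma bnd_closed t y : (forall n, bnd (t + harmonic n) y) -> bnd t y.
Proof.
move=> hb; have c := cvS e (@cv_harm t); split.
- apply: (le_lim (cv_opp c) (cv_cst y)) => n; exact: (hb n).1.
- apply: (le_lim (cv_cst y) c) => n; exact: (hb n).2.
Qed.

Lemma bnd_p y : bnd (p y) y.
Proof.
apply: bnd_closed => n.
have hl : p y < p y + harmonic n by rewrite ltrDl harmonic_gt0.
have [s [s0 bs] lts] := inf_lt (Sb_n0 y) hl.
exact: bnd_mono (ltW lts) bs.
Qed.

Lemma p_eq0 y : p y = 0 -> y = 0.
Proof.
move=> h; have [h1 h2] := bnd_p y; rewrite h scale0r oppr0 in h1 h2.
exact: leY_anti.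
Qed.

Lemma bnd_neg t y : bnd t y -> bnd t (- y).
Proof.
move=> [h1 h2]; split; first exact: le_opp.
by have := le_opp h1; rewrite opprK.
Qed.

Lemma bnd_scale_ge0 (l : R) t y : 0 <= l -> bnd t y -> bnd (l * t) (l *: y).
Proof.
move=> l0 [h1 h2]; split.
- by have := le_scale l0 h1; rewrite scalerN scalerA.
- by have := le_scale l0 h2; rewrite scalerA.
Qed.

Lemma bnd_scale (l : R) t y : bnd t y -> bnd (`|l| * t) (l *: y).
Proof.
move=> b; have [l0|l0] := leP 0 l.
- by rewrite ger0_norm //; apply: bnd_scale_ge0.
- rewrite ltr0_norm // -[l]opprK scaleNr opprK; apply: bnd_neg.
  by apply: bnd_scale_ge0 => //; rewrite oppr_ge0 ltW.
Qed.

Lemma p_scale_le (l : R) y : p (l *: y) <= `|l| * p y.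
Proof. by apply: p_le; [rewrite mulr_ge0 // p_ge0 | apply: bnd_scale; exact: bnd_p]. Qed.

Lemma p_scale (l : R) y : p (l *: y) = `|l| * p y.
Proof.
apply/eqP; rewrite eq_le p_scale_le /=.
have [->|l0] := eqVneq l 0.
  by rewrite normr0 mul0r p_ge0.
have := p_scale_le l^-1 (l *: y).
rewrite scalerA mulVf // scale1r normfV => h.
have h2 := ler_wpM2l (normr_ge0 l) h.
by rewrite mulrA mulfV ?normr_eq0 // mul1r in h2.
Qed.

Lemma p_tri x y : p (x + y) <= p x + p y.
Proof.
apply: p_le; first by rewrite addr_ge0 // p_ge0.
have [a1 a2] := bnd_p x; have [b1 b2] := bnd_p y.
split; rewrite scalerDl; last exact: le_addlr.
by rewrite opprD; apply: le_addlr.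
Qed.

Lemma p_norm : is_norm p.
Proof. split; [exact: p_ge0 | exact: p_eq0 | exact: p_scale | exact: p_tri]. Qed.

Lemma p_mono : monotone_norm le p.
Proof.
split; first exact: p_norm.
move=> x y x0 xy; apply: p_le; first exact: p_ge0.
have [b1 b2] := bnd_p y; split; last exact: leY_trans xy b2.
apply: (leY_trans _ x0); have := le_opp (le_se (p_ge0 y)).
by rewrite scale0r oppr0.
Qed.

Lemma ev_bnd_p xs x :
  (forall eps : R, 0 < eps -> eventually_in (fun n => xs n - x) (bnd eps)) ->
  (fun n => p (xs n - x)) @ \oo --> 0.
Proof.
move=> h; apply/cvgr0Pnorm_le => eps eps0.
have [N hN] := h eps eps0; exists N => // n /= Nn.
by rewrite ger0_norm ?p_ge0 //; apply: p_le (ltW eps0) (hN n Nn).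
Qed.

Lemma p_cv (Hn : normal_vector_space cv le) xs x :
  (fun n => p (xs n - x)) @ \oo --> 0 -> cv xs x.
Proof.
move=> h; have c := cvS e h; rewrite scale0r in c.
have c' := cv_opp c; rewrite oppr0 in c'.
have := Hn _ (fun n => xs n - x) _ 0 _ c' c.
move=> /(_ (fun n => bnd_p (xs n - x))) /(cv_addc x).
rewrite add0r; have -> // : (fun n => xs n - x + x) = xs.
by apply: funext => n; rewrite subrK.
Qed.

Lemma slt_trans a y b : slt cv le a y -> slt cv le y b -> slt cv le a b.
Proof.
move=> h1 h2; rewrite /slt.
have -> : b - a = (b - y) + (y - a) by rewrite addrA subrK.
exact: intK_addK h2 (intK_K h1).
Qed.

Lemma interval_open a b : order_open cv le (open_interval cv le a b).
Proof. move=> y [h1 h2]; exists a, b; split => //; exact: slt_trans h1 h2. Qed.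

Lemma ev_and (xs ys : nat -> Y) (A B : set Y) :
  eventually_in xs A -> eventually_in ys B ->
  exists N, forall n, (N <= n)%N -> A (xs n) /\ B (ys n).
Proof.
move=> [N1 h1] [N2 h2]; exists (maxn N1 N2) => n; rewrite geq_max => /andP[a b].
by split; [apply: h1 | apply: h2].
Qed.

Lemma cv_oc xs x : cv xs x -> order_conv cv le xs x.
Proof.
move=> hx U oU Ux; have [a [b [ab [ax xb] sU]]] := oU x Ux.
have c1 := cv_addc (- a) hx.
have c2 : cv (fun n => b - xs n) (b - x) by apply: cvD (cv_cst b) (cv_opp hx).
have [N hN] := ev_and (intK_open c1 ax) (intK_open c2 xb).
by exists N => n /hN [h1 h2]; apply: sU.
Qed.

Lemma oc_bnd xs x : order_conv cv le xs x ->
  forall eps : R, 0 < eps -> eventually_in (fun n => xs n - x) (bnd eps).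
Proof.
move=> h eps eps0; have ee := intK_scale eps0 he.
have s1 : slt cv le (x - eps *: e) x by rewrite /slt opprB addrC subrK.
have s2 : slt cv le x (x + eps *: e) by rewrite /slt [x + _]addrC addrK.
have [N hN] := h _ (@interval_open (x - eps *: e) (x + eps *: e)) (conj s1 s2).
exists N => n /hN [h1 h2]; split; apply: sub_le.
  + have -> : xs n - x - - (eps *: e) = xs n - (x - eps *: e).
    by rewrite opprK opprB -addrA [- x + _]addrC.
  exact: intK_K h1.
- have -> : eps *: e - (xs n - x) = x + eps *: e - xs n.
    by rewrite opprB addrCA addrA.
  exact: intK_K h2.
Qed.

Lemma oc_normal : conv_generated_by_order_topology cv le -> normal_vector_space cv le.
Proof.
move=> hg xs ys zs x hb hx hz; apply/hg => U oU Ux.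
have [a [b [ab [ax xb] sU]]] := oU x Ux.
have oI := @interval_open a b.
have [N hN] := ev_and ((hg _ _).1 hx _ oI (conj ax xb)) ((hg _ _).1 hz _ oI (conj ax xb)).
exists N => n /hN [[h1 _] [_ h2]]; apply: sU; split.
- rewrite /slt; have -> : ys n - a = (xs n - a) + (ys n - xs n) by rewrite [X in _ = X]addrC addrA subrK.
  by apply: intK_addK h1 _; apply: le_sub; exact: (hb n).1.
- rewrite /slt; have -> : b - ys n = (b - zs n) + (zs n - ys n) by rewrite addrA subrK.
  by apply: intK_addK h2 _; apply: le_sub; exact: (hb n).2.
Qed.

Lemma gen_norm_normal : conv_generated_by_monotone_norm cv le -> normal_vector_space cv le.
Proof.
move=> [nrm [[[n0 neq nsc ntri] nmon] hg]] xs ys zs x hb hx hz.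
have nopp v : nrm (- v) = nrm v by rewrite -scaleN1r nsc normrN normr1 mul1r.
apply/hg; have ax := (hg _ _).1 hx; have az := (hg _ _).1 hz.
have F : Filter (\oo : set_system nat) by exact: _.
have hh := cvgD az (cvgD ax ax); rewrite !addr0 in hh; have {}hh := hh F F.
apply: (squeeze_cvgr _ (cvg_cst 0) hh); exists 0%N => // n _ /=.
rewrite n0 /=.
have -> : ys n - x = (ys n - xs n) + (xs n - x) by rewrite addrA subrK.
apply: le_trans (ntri _ _) _; rewrite !fctE addrA lerD2r.
have m : nrm (ys n - xs n) <= nrm (zs n - xs n).
  apply: nmon; first exact: le_sub (hb n).1.
  exact: le_add (hb n).2.
apply: le_trans m _.
have -> : zs n - xs n = (zs n - x) + - (xs n - x) by rewrite opprB addrA subrK.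
by apply: le_trans (ntri _ _) _; rewrite nopp.
Qed.

End Proof7.

Theorem theorem7p9 (R : realType) (Y : lmodType R) (cv : convergence Y)
    (le : Y -> Y -> Prop) :
  solid_vector_space cv le ->
  (normal_vector_space cv le <-> conv_generated_by_monotone_norm cv le) /\
  (normal_vector_space cv le <-> conv_generated_by_order_topology cv le).
Proof.
move=> H; have [_ _ [_ _ [e he]]] := H.
split; split.
- move=> Hn; exists (@p R Y le e); split; first exact: (p_mono H he).
  move=> xs x; split.
  + by move=> hx; apply: (ev_bnd_p H he); apply: (oc_bnd H he); apply: (cv_oc H).
  + exact: (p_cv H he Hn).
- exact: (gen_norm_normal H).
- move=> Hn xs x; split; first exact: (cv_oc H).
  by move=> h; apply: (p_cv H he Hn); apply: (ev_bnd_p H he); apply: (oc_bnd H he).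
- exact: (oc_normal H).
Qed.
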